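(* Let $J\ge 2$ be an integer, $\tau_j=2^j$, and for $(\alpha,\beta)\in(0,\infty)\times(0,\pi]$ define $\nu_j(\alpha,\beta)=\dfrac{\alpha^2\{1-\cos(\beta\tau_j/2)\}^2}{\tau_j^2\{1-\cos\beta\}}$ for $j=1,\dots,J$. Then the map $(\alpha,\beta)\mapsto[\nu_j(\alpha,\beta)]_{j=1,\dots,J}$ is injective on $(0,\infty)\times(0,\pi]$: if $\nu_j(\alpha_1,\beta_1)=\nu_j(\alpha_2,\beta_2)$ for all $j=1,\dots,J$, then $(\alpha_1,\beta_1)=(\alpha_2,\beta_2)$.
   Context: $\nu_j(\alpha,\beta)$ is the theoretical Haar wavelet variance at level $j$ of the sinusoidal process $S_t=\alpha\sin(\beta t+U)$, $U\sim\mathcal U(0,2\pi)$. *)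

(* Defs.v *)
From Stdlib Require Import Reals.
Open Scope R_scope.

Definition tau (j : nat) : R := 2 ^ j.

(* theoretical Haar wavelet variance at level j of alpha sin(beta t + U) *)
Definition nu (j : nat) (alpha beta : R) : R :=
  alpha ^ 2 * (1 - cos (beta * tau j / 2)) ^ 2 / (tau j ^ 2 * (1 - cos beta)).

(* Main.v *)
Require Import Defs.
From Stdlib Require Import Reals Lra Psatz.
Open Scope R_scope.

Lemma cos_lt1 b : 0 < b <= PI -> cos b < 1.
Proof.
  intros Hb. destruct (COS_bound b) as [_ H]. destruct H as [H|H]; auto.
  exfalso. pose proof PI_RGT_0. assert (b = 0). { apply cos_inj; [lra|lra|rewrite cos_0; auto]. } lra.
Qed.

Lemma nu1 a b : 0 < b <= PI -> nu 1 a b = a^2 * (1 - cos b) / 4.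
Proof.
  intros Hb. pose proof (cos_lt1 b Hb). unfold nu, tau.
  replace (b * 2 ^ 1 / 2) with b by field. field. lra.
Qed.

Lemma nu2 a b : 0 < b <= PI -> nu 2 a b = a^2 * (1 - cos b) * (1 + cos b)^2 / 4.
Proof.
  intros Hb. pose proof (cos_lt1 b Hb). unfold nu, tau.
  replace (b * 2 ^ 2 / 2) with (2 * b) by field. rewrite cos_2a_cos. field. lra.
Qed.

Theorem lemma2 (J : nat) (HJ : (2 <= J)%nat) (a1 b1 a2 b2 : R) :
  0 < a1 -> 0 < b1 <= PI -> 0 < a2 -> 0 < b2 <= PI ->
  (forall j : nat, (1 <= j <= J)%nat -> nu j a1 b1 = nu j a2 b2) ->
  a1 = a2 /\ b1 = b2.
Proof.
  intros Ha1 Hb1 Ha2 Hb2 H.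
  pose proof (H 1%nat ltac:(lia)) as E1. pose proof (H 2%nat ltac:(lia)) as E2.
  rewrite !nu1 in E1 by auto. rewrite !nu2 in E2 by auto.
  pose proof (cos_lt1 _ Hb1). pose proof (cos_lt1 _ Hb2).
  pose proof (COS_bound b1). pose proof (COS_bound b2).
  set (c1 := cos b1) in *. set (c2 := cos b2) in *.
  assert (P : 0 < a1^2 * (1 - c1)) by (apply Rmult_lt_0_compat; nra).
  assert (Q : (1 + c1)^2 = (1 + c2)^2).
  { apply Rmult_eq_reg_l with (a1^2 * (1 - c1)); [|lra].
    replace (a1 ^ 2 * (1 - c1) * (1 + c2) ^ 2) with (a2 ^ 2 * (1 - c2) * (1 + c2) ^ 2) by nra.
    lra. }
  assert (C : c1 = c2) by nra.
  assert (B : b1 = b2) by (apply cos_inj; auto; lra).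
  split; [|exact B].
  subst c1. rewrite C in E1. assert (a1^2 = a2^2) by (apply Rmult_eq_reg_r with ((1-c2)/4); lra || (unfold Rdiv in *; nra)).
  nra.
Qed.
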